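(* Let $b\ge2$ be an integer and let $D$ be a nonempty subset of $\{-[\frac b2],-[\frac b2]+1,\ldots,b-1-[\frac b2]\}$. Let $(D_i)_{i\ge1}$ be a sequence with $D_i=D$ or $D_i=\{0\}$ for each $i$, and define $$\Lambda(b,D):=\bigcup_{k=1}^\infty\left\{\sum_{i=1}^k b^{i-1}d_i: d_i\in D_i\text{ for }1\le i\le k\right\}.$$ Then $$\dim_{Be}\Lambda(b,D)=\limsup_{n\to\infty}\frac{\#\{i:D_i=D,\ 1\le i\le n\}}{n}\cdot\frac{\log\#D}{\log b}.$$
   Context: $[x]$ is the integer part of $x$. For countable $\Lambda\subseteq\mathbb{R}^d$ and $r>0$, $D_r^+(\Lambda)=\limsup_{h\to\infty}\sup_{x\in\mathbb{R}^d}\#(\Lambda\cap B(x,h))/h^r$ ($B(x,h)$ the open ball), and the Beurling dimension is $\dim_{Be}(\Lambda)=\inf\{r:D_r^+(\Lambda)=0\}$. *)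

(* Defs.v *)
From HB Require Import structures.
From mathcomp Require Import all_boot all_order all_algebra.
From mathcomp Require Import finmap.
From mathcomp Require Import all_classical all_reals all_analysis.
Set Implicit Arguments. Unset Strict Implicit. Unset Printing Implicit Defensive.
Import Order.TTheory GRing.Theory Num.Theory.
Import numFieldNormedType.Exports.
Local Open Scope classical_set_scope.
Local Open Scope ring_scope.
Local Open Scope ereal_scope.

Definition ball_count (R : realType) (Lam : set R) (x h : R) : \bar R :=
  \esum_(y in Lam `&` [set y | `|y - x| < h]%R) 1.

Definition upper_density (R : realType) (r : R) (Lam : set R) : \bar R :=
  limf_esup (fun h : R => ereal_sup [set ball_count Lam x h * ((h `^ r)^-1)%:E
                                     | x in [set: R]]) +oo%R.

Definition beurling_dim (R : realType) (Lam : set R) : \bar R :=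
  ereal_inf [set r%:E | r in [set r : R | (0 < r)%R /\ upper_density r Lam = 0]].

Definition Lambda_bD (R : realType) (b : nat) (Di : nat -> {fset int}) : set R :=
  [set x | exists k : nat, (1 <= k)%N /\ exists d : nat -> int,
      (forall i, (1 <= i <= k)%N -> d i \in Di i) /\
      x = ((\sum_(1 <= i < k.+1) (b ^ (i - 1))%:Z * d i)%R)%:~R].

Definition count_full (D : {fset int}) (Di : nat -> {fset int}) (n : nat) : nat :=
  #|[set i : 'I_n.+1 | (1 <= i)%N && (Di i == D)]|.

Definition num_digits (D : {fset int}) : nat := #|` D|%fset.
Arguments Lambda_bD R b Di : clear implicits.

(* Main.v *)
Require Import Defs.
From HB Require Import structures.
From mathcomp Require Import all_boot all_order all_algebra.
From mathcomp Require Import finmap.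
From mathcomp Require Import all_classical all_reals all_analysis.
From mathcomp Require Import zify ring lra.
Import Order.TTheory GRing.Theory Num.Theory.
Local Open Scope classical_set_scope.
Local Open Scope ring_scope.
Section S.
Variable R : realType.

Lemma sum1_seq (s : seq R) : uniq s ->
  (\sum_(x \in [set` s]) (1 : \bar R))%E = (size s)%:R%:E.
Proof.
move=> us; rewrite -fsbig_seq // sumEFin; congr (_%:E).
by rewrite -sum1_size natr_sum.
Qed.

Lemma esum1_le_seq (S : set R) (s : seq R) : S `<=` [set` s] ->
  (\esum_(y in S) (1 : \bar R) <= (size s)%:R%:E)%E.
Proof.
move=> Ss; apply: ge_ereal_sup => _ [F [finF FS] <-].
apply: (@le_trans _ _ (\sum_(x \in [set` undup s]) (1 : \bar R))%E).
  apply: lee_fsum_nneg_subset => //; first exact: finite_seq.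
  by move=> x; rewrite !inE /= mem_undup => /FS /Ss.
rewrite sum1_seq ?undup_uniq // lee_fin ler_nat; exact: size_undup.
Qed.

Lemma esum1_ge_seq (S : set R) (s : seq R) : uniq s -> [set` s] `<=` S ->
  ((size s)%:R%:E <= \esum_(y in S) (1 : \bar R))%E.
Proof.
move=> us sS; apply: esum_ge; exists [set` s]; first by split=> //; exact: finite_seq.
by rewrite sum1_seq.
Qed.
End S.

Section Comb.
Variables (b : nat) (D : {fset int}) (Di : nat -> {fset int}).
Hypothesis hb : (2 <= b)%N.
Hypothesis hD : forall d, d \in D -> (- (b %/ 2)%:Z <= d) && (d <= (b - 1)%:Z - (b %/ 2)%:Z).
Hypothesis hDi : forall i, (1 <= i)%N -> Di i = D \/ Di i = [fset (0 : int)]%fset.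

Fixpoint P (j : nat) : seq int :=
  if j is j'.+1 then [seq p + (b ^ j')%:Z * d | p <- P j', d <- enum_fset (Di j'.+1)]
  else [:: 0].

Definition psum (d : nat -> int) (j : nat) : int := \sum_(1 <= i < j.+1) (b ^ (i - 1))%:Z * d i.

Lemma psumS d j : psum d j.+1 = psum d j + (b ^ j)%:Z * d j.+1.
Proof. by rewrite /psum big_nat_recr //= subn1. Qed.

Lemma P_mem j d : (forall i, (1 <= i <= j)%N -> d i \in Di i) -> psum d j \in P j.
Proof.
elim: j => [|j IH] Hd; first by rewrite /psum big_geq.
rewrite psumS /=; apply: (allpairs_f (fun p d0 => p + (b ^ j)%:Z * d0)).
  by apply: IH => i hi; apply: Hd; lia.
by apply: Hd; rewrite /= leqnn.
Qed.

Lemma P_ex j p : p \in P j -> exists d, (forall i, (1 <= i <= j)%N -> d i \in Di i) /\ p = psum d j.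
Proof.
elim: j p => [|j IH] p /=.
  by rewrite inE => /eqP ->; exists (fun _ => 0); split=> [i|]; [lia| rewrite /psum big_geq].
case/allpairsP => -[p' d0] /= [hp' hd0 ->].
have [d [Hd ->]] := IH _ hp'.
exists (fun i => if i == j.+1 then d0 else d i); split.
  move=> i /andP[h1 h2]; case: eqP => [->//|/eqP ne]; apply: Hd; lia.
rewrite psumS eqxx; congr (_ + _); apply: eq_big_nat => i /andP[_ hi].
by rewrite ifF //; apply/eqP; lia.
Qed.

End Comb.

Section Comb2.
Variables (b : nat) (D : {fset int}) (Di : nat -> {fset int}).
Hypothesis hb : (2 <= b)%N.
Hypothesis hD : forall d, d \in D -> (- (b %/ 2)%:Z <= d) && (d <= (b - 1)%:Z - (b %/ 2)%:Z).
Hypothesis hDi : forall i, (1 <= i)%N -> Di i = D \/ Di i = [fset (0 : int)]%fset.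
Lemma cfE n : count_full D Di n = (\sum_(0 <= i < n.+1) ((1 <= i)%N && (Di i == D)))%N.
Proof.
rewrite /count_full -sum1_card big_mkord big_mkcond /=.
apply: eq_bigr => i _; case: (boolP ((0 < i)%N && (Di i == D))) => H.
  by rewrite mem_set.
by rewrite ifF //; apply/negbTE/negP => /set_mem /=; rewrite (negbTE H).
Qed.
Lemma cfS n : count_full D Di n.+1 = (count_full D Di n + (Di n.+1 == D))%N.
Proof. by rewrite !cfE big_nat_recr. Qed.

Lemma cf_mono m n : (m <= n)%N -> (count_full D Di m <= count_full D Di n)%N.
Proof.
elim: n => [|n IH]; first by rewrite leqn0 => /eqP ->.
rewrite leq_eqVlt => /orP[/eqP -> //|]; rewrite ltnS => /IH h.
by rewrite cfS (leq_trans h) // leq_addr.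
Qed.
Lemma cf_le n : (count_full D Di n <= n)%N.
Proof.
elim: n => [|n IH]; first by rewrite cfE big_nat1.
rewrite cfS; case: (_ == _) => /=; lia.
Qed.
Lemma size_P j : size (P b Di j) = (#|` D| ^ count_full D Di j)%N.
Proof.
elim: j => [|j IH] /=; first by rewrite cfE big_nat1.
rewrite size_allpairs IH cfS.
have : size (enum_fset (Di j.+1)) = #|` Di j.+1|%fset by [].
move=> ->; case: (hDi j.+1 (ltn0Sn j)) => ->; first by rewrite eqxx addn1 expnS mulnC.
rewrite cardfs1; case: eqP => [<-|_]; last by rewrite addn0 muln1.
by rewrite cardfs1 !exp1n.
Qed.
Definition u := (b %/ 2)%:Z.

Lemma u_le : (b %/ 2 <= b - 1)%N.
Proof. have := hb; lia. Qed.

Lemma digit_bd i d : (1 <= i)%N -> d \in Di i -> - u <= d <= (b - 1)%:Z - u.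
Proof.
move=> hi; case: (hDi i hi) => -> hd; first exact: hD.
move: hd; rewrite inE => /eqP ->; have := u_le; rewrite /u; lia.
Qed.
Lemma P_bd j p : p \in P b Di j ->
  - u * ((b ^ j)%:Z - 1) <= (b - 1)%:Z * p <= ((b - 1)%:Z - u) * ((b ^ j)%:Z - 1).
Proof.
elim: j p => [|j IH] p /=.
  by rewrite inE => /eqP ->; rewrite expn0 subrr !mulr0 lexx.
case/allpairsP => -[p' d0] /= [hp' hd0 ->].
have := IH _ hp'; have := @digit_bd j.+1 d0 (ltn0Sn j) hd0.
have : (1 <= b ^ j)%N by rewrite expn_gt0; have := hb; lia.
have := u_le; have := hb.
rewrite /u expnS PoszM. move: (b ^ j)%N => B. move: (b %/ 2)%N => U.
nia.
Qed.
Lemma P_abs j p : p \in P b Di j -> `|p| < (b ^ j)%:Z.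
Proof.
move=> /P_bd; have := u_le; have := hb; rewrite /u ltr_norml.
move: (b ^ j)%N => B; move: (b %/ 2)%N => U; nia.
Qed.

Lemma P_uniq j : uniq (P b Di j).
Proof.
elim: j => [|j IH] //=.
apply: allpairs_uniq => //; first exact: fset_uniq.
move=> [p d] [p' d'] /allpairsP [[p1 d1] /= [h1 h2 [-> ->]]] /allpairsP [[p2 d2] /= [h3 h4 [-> ->]]] /= E.
have := @P_bd j p1 h1; have := @P_bd j p2 h3.
have := @digit_bd j.+1 d1 (ltn0Sn j) h2; have := @digit_bd j.+1 d2 (ltn0Sn j) h4.
have : (1 <= b ^ j)%N by rewrite expn_gt0; have := hb; lia.
have := u_le; have := hb; move: E.
rewrite /u; move: (b ^ j)%N => B; move: (b %/ 2)%N => U => E *.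
have ed : d1 = d2 by nia.
by subst d2; move/addIr: E => ->.
Qed.
Definition A m := flatten [seq P b Di j | j <- iota 0 m.+1].
Hypothesis hD0 : D != fset0.
Lemma size_A m : (size (A m) <= m.+1 * #|` D| ^ count_full D Di m)%N.
Proof.
rewrite /A size_flatten /shape -map_comp sumnE big_map.
apply: leq_trans (_ : \sum_(j <- iota 0 m.+1) #|` D| ^ count_full D Di m <= _)%N.
  rewrite big_seq_cond [X in (_ <= X)%N]big_seq_cond.
  apply: leq_sum => j /andP[]; rewrite mem_iota => /andP[_ hj] _ /=.
  rewrite size_P; apply: leq_pexp2l; first by rewrite lt0n cardfs_eq0.
  by apply: cf_mono; lia.
by rewrite (_ : iota 0 m.+1 = index_iota 0 m.+1) // sum_nat_const_nat subn0 mulnC.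
Qed.
Lemma decomp m k d : (forall i, (1 <= i <= k)%N -> d i \in Di i) ->
  exists a q, a \in A m /\ psum b d k = a + (b ^ m)%:Z * q.
Proof.
move=> Hd; case: (leqP k m) => hkm.
  exists (psum b d k), 0; rewrite mulr0 addr0; split => //.
  apply/flatten_mapP; exists k; first by rewrite mem_iota; lia.
  exact: P_mem.
exists (psum b d m), (\sum_(m.+1 <= i < k.+1) (b ^ (i - 1 - m))%:Z * d i); split.
  apply/flatten_mapP; exists m; first by rewrite mem_iota; lia.
  by apply: (@P_mem b Di hb m d) => i hi; apply: Hd; lia.
rewrite /psum (big_cat_nat (n := m.+1)); try lia.
congr (_ + _); rewrite mulr_sumr; apply: eq_big_nat => i hi.
by rewrite mulrA -PoszM -expnD; congr ((b ^ _)%:Z * _); lia.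
Qed.
Lemma count_ub (R : realType) m (x h : R) : 0 < h -> h <= (b ^ m)%:R ->
  (ball_count (Lambda_bD R b Di) x h <= ((2 * (m.+1 * #|` D| ^ count_full D Di m))%N%:R)%:E)%E.
Proof.
move=> h0 hB.
set B := (b ^ m)%N.
pose f a := Num.floor ((x - h - a%:~R) / B%:R).
have Bpos : 0 < (B%:R : R) by rewrite ltr0n expn_gt0; have := hb; lia.
apply: (le_trans (@esum1_le_seq R _ [seq ((a + B%:Z * (f a + j))%:~R : R) | a <- A m, j <- [:: 1; 2]] _)).
  move=> y [[k [hk [d [Hd ->]]]] hy].
  have [a [q [ha E]]] := decomp m k d Hd.
  rewrite -/(psum b d k) in hy *.
  have [F1 F2] : ((f a)%:~R : R) < q%:~R /\ (q%:~R : R) < (f a)%:~R + 3.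
    have /andP[t1 t2] := floor_itv ((x - h - a%:~R) / B%:R).
    rewrite -/(f a) intrD in t1 t2.
    have ht : (x - h - a%:~R) / B%:R * B%:R = x - h - a%:~R by rewrite divfK // gt_eqF.
    move: hy; rewrite /= E intrD intrM ltr_norml => /andP[hy1 hy2].
    move: (f a) t1 t2 ht => F t1 t2 ht.
    move: ((x - h - a%:~R) / B%:R) t1 t2 ht => T t1 t2 ht.
    split; nra.
  have : (q - f a \in [:: 1; 2]).
    move: F1 F2; rewrite -[_ + 3]/((f a)%:~R + 3%:~R) -intrD !ltr_int => F1 F2.
    rewrite !inE; lia.
  move=> hj; apply/allpairsP; exists (a, q - f a); split => //=.
  by rewrite E; congr (_%:~R); ring.
rewrite lee_fin ler_nat size_allpairs /= mulnC leq_mul2l /=.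
exact: size_A.
Qed.
Lemma count_lb (R : realType) n : (1 <= n)%N ->
  (((#|` D| ^ count_full D Di n)%N%:R)%:E <= ball_count (Lambda_bD R b Di) 0 (b ^ n)%:R)%E.
Proof.
move=> hn; rewrite -size_P -(size_map (fun p : int => (p%:~R : R))).
apply: esum1_ge_seq; first by rewrite (map_inj_uniq (@intr_inj _)) P_uniq.
move=> y /= /mapP [p hp ->]; split.
  have [d [Hd E]] := @P_ex b Di hb n p hp.
  by exists n; split => //; exists d; split => //; rewrite E.
rewrite /= subr0 -intr_norm -[(b ^ n)%:R]/(((b ^ n)%:Z)%:~R) ltr_int.
exact: P_abs.
Qed.
Lemma tail_bd (R : realType) (be C e : R) : 0 < be -> 0 <= C -> 0 < e ->
  exists M : nat, forall m, (M <= m)%N -> m.+1%:R * C * expR (- (be * m%:R)) <= e.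
Proof.
move=> b0 C0 e0; exists (Num.trunc (4 * C / (be ^+ 2 * e))).+1 => m hm.
have hX : 4 * C / (be ^+ 2 * e) < m%:R.
  apply: lt_le_trans (truncnS_gt _) _; rewrite ler_nat //.
have m1 : 1 <= (m%:R : R) by rewrite ler1n; lia.
have hE := @expR_ge1Dxn R (be * m%:R) 1 (mulr_ge0 (ltW b0) (ler0n _ _)).
rewrite expRN; set E := expR _ in hE *.
have E0 : 0 < E by apply: expR_gt0.
rewrite ler_pdivrMr // mulrS.
have hX' : 4 * C < m%:R * (be ^+ 2 * e).
  by rewrite -ltr_pdivrMr // mulr_gt0 // exprn_gt0.
rewrite (_ : (2`!)%:R = 2 :> R) // in hE.
move: hX' hE m1; move: (m%:R : R) => X hX' hE m1.
have h1 := ler_wpM2l (ltW e0) hE.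
have h2 := ler_wpM2l (le_trans ler01 m1) (ltW hX').
have h3 : 0 <= (X - 1) * C by rewrite mulr_ge0 // subr_ge0.
nra.
Qed.
Lemma ratio_bd (R : realType) (r l h : R) (m k : nat) : 0 < r -> k%:R <= l * m%:R ->
  (1 <= m)%N -> (b ^ m.-1)%:R < h ->
  (2 * (m.+1 * #|` D| ^ k))%N%:R / h `^ r <=
  m.+1%:R * (2 * expR (r * ln (b%:R : R))) *
    expR (- ((r * ln (b%:R : R) - l * ln (#|` D|%:R : R)) * m%:R)).
Proof.
move=> r0 hk m1 hh.
set lb := ln (b%:R : R); set lN := ln (#|` D|%:R : R).
have N1 : 1 <= (#|` D|%:R : R) by rewrite ler1n lt0n cardfs_eq0.
have lN0 : 0 <= lN by apply: ln_ge0.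
have h0 : 0 < h by apply: le_lt_trans hh; rewrite ler0n.
have eN : ((#|` D| ^ k)%N%:R : R) = expR (k%:R * lN).
  have N0 : 0 < (#|` D|%:R : R) by apply: lt_le_trans N1.
  rewrite natrX -[LHS]lnK; last by rewrite posrE exprn_gt0.
  by rewrite lnXn // mulr_natl.
have eh : h `^ r = expR (r * ln h) by rewrite /powR gt_eqF.
have lh : (m%:R - 1) * lb < ln h.
  have : ln ((b ^ m.-1)%N%:R : R) < ln h.
    rewrite ltr_ln // posrE ltr0n expn_gt0; have := hb; lia.
  rewrite natrX lnXn ?ltr0n; last by have := hb; lia.
  have em : (m.-1)%:R = m%:R - 1 :> R by rewrite -[in RHS](prednK m1) -natr1 addrK.
  by rewrite -[X in X < _ -> _]mulr_natl em mulrC.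
have key : expR (k%:R * lN) * expR (- (r * ln h)) <= expR (r * lb) * expR (- ((r * lb - l * lN) * m%:R)).
  rewrite -!expRD ler_expR.
  have t1 := ler_wpM2r lN0 hk.
  have t2 : r * ((m%:R - 1) * lb) < r * ln h by rewrite ltr_pM2l.
  nra.
rewrite natrM natrM eN eh -expRN.
have := ler_wpM2l (_ : 0 <= 2 * m.+1%:R) key.
move=> /(_ (mulr_ge0 (ler0n _ 2) (ler0n _ _))) H.
set E1 := expR (k%:R * lN) in H *; set E2 := expR (- (r * ln h)) in H *.
set E3 := expR (r * lb) in H *; set E4 := expR (- _) in H *.
move: (m.+1%:R : R) H => M H.
nra.
Qed.
Lemma exists_m (R : realType) (h : R) : 1 < h ->
  exists m, [/\ (1 <= m)%N, (b ^ m.-1)%:R < h & h <= (b ^ m)%:R].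
Proof.
move=> h1.
have ex : exists n, h <= (b ^ n)%:R.
  exists (Num.trunc h).+1; apply: ltW; apply: lt_le_trans (truncnS_gt _) _.
  by rewrite ler_nat ltnW // ltn_expl.
case: (ex_minnP ex) => m hm hmin.
have m1 : (1 <= m)%N.
  by rewrite lt0n; apply/eqP => m0; move: hm; rewrite m0 expn0 leNgt h1.
exists m; split => //; rewrite ltNge; apply/negP => /hmin; rewrite -subn1; lia.
Qed.
Lemma UB (R : realType) (r l : R) (n0 : nat) : 0 < r ->
  (forall n, (n0 <= n)%N -> (count_full D Di n)%:R <= l * n%:R) ->
  l * ln (#|` D|%:R : R) < r * ln (b%:R : R) ->
  upper_density r (Lambda_bD R b Di) = 0%E.
Proof.
move=> r0 hc hlr.
rewrite /upper_density.
set F := (fun h : R => _).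
have F0 : forall h, (0 <= F h)%E.
  move=> h; apply: le_ereal_sup_tmp.
  exists (ball_count (Lambda_bD R b Di) 0 h * ((h `^ r)^-1)%:E)%E; first by exists 0.
  apply: mule_ge0; first by apply: esum_ge0 => *; exact: lee01.
  by rewrite lee_fin invr_ge0 powR_ge0.
apply/eqP; rewrite eq_le limf_esup_ge0 // ?andbT.
apply/lee_addgt0Pr => e e0; rewrite add0e.
set lb := ln (b%:R : R) in hlr *; set lN := ln (#|` D|%:R : R) in hlr *.
have be0 : 0 < r * lb - l * lN by rewrite subr_gt0.
have C0 : 0 <= 2 * expR (r * lb) by rewrite mulr_ge0 // ltW // expR_gt0.
have [M HM] := @tail_bd R _ _ _ be0 C0 e0.
pose K := (maxn M n0).+1.
apply: ge_ereal_inf; exists (ereal_sup (F @` [set h | (b ^ K)%:R < h])).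
  by exists [set h | (b ^ K)%:R < h] => //; exists (b ^ K)%:R; split => //; exact: num_real.
apply: ge_ereal_sup => _ [h hh <-].
apply: ge_ereal_sup => _ [x _ <-].
have h1 : 1 < h by apply: le_lt_trans hh; rewrite ler1n expn_gt0; have := hb; lia.
have [m [m1 hm1 hm2]] := @exists_m R h h1.
have hh' : (b ^ K)%:R < h := hh.
have Km : (K <= m)%N.
  rewrite leqNgt; apply/negP => mK.
  have hbm : ((b ^ m)%:R : R) <= (b ^ K)%:R.
    rewrite ler_nat; apply: leq_pexp2l; [by have := hb; lia | exact: ltnW].
  by have := le_lt_trans (le_trans hm2 hbm) hh'; rewrite ltxx.
have h0 : 0 < h by apply: lt_trans h1.
apply: le_trans (lee_wpmul2r _ (@count_ub R m x h h0 hm2)) _.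
  by rewrite lee_fin invr_ge0 powR_ge0.
rewrite -EFinM lee_fin.
apply: le_trans (@ratio_bd R r l h m _ r0 (hc m _) m1 hm1) _; first by lia.
apply: HM; lia.
Qed.
Lemma LB (R : realType) (r l : R) : 0 < r ->
  r * ln (b%:R : R) < l * ln (#|` D|%:R : R) ->
  (forall n0, exists n, (n0 <= n)%N /\ l * n%:R < (count_full D Di n)%:R) ->
  (1 <= upper_density r (Lambda_bD R b Di))%E.
Proof.
move=> r0 hlr hc.
set lb := ln (b%:R : R) in hlr *; set lN := ln (#|` D|%:R : R) in hlr *.
have N1 : 1 <= (#|` D|%:R : R) by rewrite ler1n lt0n cardfs_eq0.
have lN0 : 0 <= lN by apply: ln_ge0.
have N0 : 0 < (#|` D|%:R : R) by apply: lt_le_trans N1.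
rewrite /upper_density; apply: le_ereal_inf_tmp => _ [V [M [_ HM]] <-].
pose n0 := (Num.trunc M).+1.
have [n [hn hcn]] := hc n0.
have n1 : (1 <= n)%N by apply: leq_trans hn.
have hMh : M < (b ^ n)%:R.
  apply: lt_le_trans (truncnS_gt _) _; rewrite ler_nat -/n0.
  apply: leq_trans hn _; apply: ltnW; apply: ltn_expl; exact: hb.
apply: le_ereal_sup_tmp; eexists; first by exists (b ^ n)%:R; [exact: HM | reflexivity].
apply: le_ereal_sup_tmp; eexists; first by exists 0.
have hpos : 0 < ((b ^ n)%:R : R) by rewrite ltr0n expn_gt0; have := hb; lia.
have hinv : (0 <= (((b ^ n)%:R `^ r)^-1)%:E)%E by rewrite lee_fin invr_ge0 powR_ge0.
apply: le_trans (lee_wpmul2r hinv (@count_lb R n n1)).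
rewrite -EFinM lee_fin.
have eN : ((#|` D| ^ count_full D Di n)%N%:R : R) = expR ((count_full D Di n)%:R * lN).
  rewrite natrX -[LHS]lnK; last by rewrite posrE exprn_gt0.
  by rewrite lnXn // mulr_natl.
have eh : ((b ^ n)%:R : R) `^ r = expR (r * (n%:R * lb)).
  rewrite /powR gt_eqF // natrX lnXn ?ltr0n; last by have := hb; lia.
  by rewrite mulr_natl.
rewrite eN eh -expRN -expRD; apply: le_trans (expR_ge1Dx _); rewrite lerDl subr_ge0.
have t1 : l * n%:R * lN <= (count_full D Di n)%:R * lN by rewrite ler_wpM2r // ltW.
have t2 : r * lb * n%:R < l * lN * n%:R by rewrite ltr_pM2r // ltr0n.
nra.
Qed.
End Comb2.
Section LS.
Variables (R : realType) (c : nat -> nat).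
Hypothesis hc : forall n, (c n <= n)%N.
Let u := fun n : nat => (((c n)%:R / n%:R : R)%:E).

Lemma u01 n : (0 <= u n <= 1)%E.
Proof.
rewrite /u !lee_fin divr_ge0 //=; case: n => [|n]; first by rewrite invr0 mulr0.
by rewrite ler_pdivrMr ?ltr0n // mul1r ler_nat.
Qed.

Lemma ls_ge0 : (0 <= limn_esup u)%E.
Proof.
apply: limf_esup_ge0; last by move=> n; have /andP[] := u01 n.
exact: filter_not_empty.
Qed.
Lemma ls_le1 : (limn_esup u <= 1)%E.
Proof.
apply: ge_ereal_inf; exists (ereal_sup (u @` setT)).
  exists setT => //; exact: filterT.
by apply: ge_ereal_sup => _ [n _ <-]; have /andP[] := u01 n.
Qed.
Lemma ls_lt (l : R) : (limn_esup u < l%:E)%E -> exists n0, forall n, (n0 <= n)%N -> (c n)%:R <= l * n%:R.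
Proof.
move=> /ereal_inf_lt [_ [V hV <-]] hsup.
case: hV => N _ HN; exists N => n hn.
have : (u n < l%:E)%E.
  by apply: le_lt_trans hsup; apply: ereal_sup_ubound; exists n => //; apply: HN.
rewrite /u lte_fin; case: n hn => [|n] _.
  by move=> _; have := hc 0; rewrite leqn0 => /eqP ->; rewrite mulr0.
by rewrite ltr_pdivrMr ?ltr0n // => /ltW.
Qed.
Lemma ls_gt (l : R) : 0 < l -> (l%:E < limn_esup u)%E -> forall n0, exists n, (n0 <= n)%N /\ l * n%:R < (c n)%:R.
Proof.
move=> l0 hl n0.
have : (l%:E < ereal_sup (u @` [set n | (n0 <= n)%N]))%E.
  apply: lt_le_trans hl _; apply: ereal_inf_lbound; exists [set n | (n0 <= n)%N] => //.
  by exists n0.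
case/ereal_sup_gt => _ [n hn <-]; rewrite /u lte_fin => H; exists n; split => //.
case: n hn H => [|n] _.
  by rewrite invr0 mulr0 => /(lt_trans l0); rewrite ltxx.
by rewrite ltr_pdivlMr ?ltr0n.
Qed.
End LS.

Theorem lemma5p2 (R : realType) (b : nat) (D : {fset int}) (Di : nat -> {fset int})
  (hb : (2 <= b)%N)
  (hD0 : D != fset0)
  (hD : forall d, d \in D -> (- (b %/ 2)%:Z <= d) && (d <= (b - 1)%:Z - (b %/ 2)%:Z))
  (hDi : forall i, (1 <= i)%N -> Di i = D \/ Di i = [fset (0 : int)]%fset) :
  beurling_dim (Lambda_bD R b Di) =
  (limn_esup (fun n : nat => ((count_full D Di n)%:R / n%:R : R)%:E) *
   (ln ((num_digits D)%:R : R) / ln (b%:R : R))%:E)%E.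
Proof.
have hc : forall n, (count_full D Di n <= n)%N := @cf_le b D Di hb.
have L0 := @ls_ge0 R _ hc; have L1 := @ls_le1 R _ hc.
set L := limn_esup _ in L0 L1 *.
have Lfin : L \is a fin_num by rewrite ge0_fin_numE // (le_lt_trans L1) // ltey.
have LE : L = (fine L)%:E by rewrite fineK.
set Lr := fine L in LE.
have Lr0 : 0 <= Lr by rewrite -lee_fin -LE.
rewrite /num_digits.
set lb := ln (b%:R : R); set lN := ln (#|` D|%:R : R).
have lb0 : 0 < lb by apply: ln_gt0; rewrite ltr1n.
have N1 : 1 <= (#|` D|%:R : R) by rewrite ler1n lt0n cardfs_eq0.
have lN0 : 0 <= lN by apply: ln_ge0.
set t := lN / lb.
have t0 : 0 <= t by rewrite divr_ge0 // ltW.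
have tlb : t * lb = lN by rewrite divfK // gt_eqF.
rewrite LE -EFinM; set s := Lr * t.
have s0 : 0 <= s by rewrite mulr_ge0.
rewrite /beurling_dim; apply/eqP; rewrite eq_le; apply/andP; split.
- apply/lee_addgt0Pr => e e0; apply: ge_ereal_inf.
  exists (s + e)%:E; last by rewrite EFinD.
  exists (s + e) => //; split; first by lra.
  pose de := e * lb / (lN + 1).
  have de0 : 0 < de by rewrite divr_gt0 ?mulr_gt0 //; lra.
  have hde : de * (lN + 1) = e * lb by rewrite divfK // gt_eqF //; lra.
  have [n0 hn0] : exists n0, forall n, (n0 <= n)%N -> (count_full D Di n)%:R <= (Lr + de) * n%:R.
    by apply: (@ls_lt R _ hc); rewrite -[limn_esup _]/L LE lte_fin ltrDl.
  apply: (@UB b D Di hb hDi hD0 R (s + e) (Lr + de) n0) => //; first by lra.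
  have slb : s * lb = Lr * lN by rewrite /s -mulrA tlb.
  rewrite -/lN -/lb; nra.
- apply: le_ereal_inf_tmp => _ [r [r0 hr] <-].
  rewrite lee_fin leNgt; apply/negP => rs.
  have tp : 0 < t by rewrite /s in rs; nra.
  have rt : r / t < Lr by rewrite ltr_pdivrMr // -/s.
  pose l := (r / t + Lr) / 2.
  have l0 : 0 < l by rewrite /l divr_gt0 // ltr_wpDr // divr_gt0.
  have lLr : l < Lr by rewrite /l; lra.
  have rl : r / t < l by rewrite /l; lra.
  have := @LB b D Di hb hD hDi hD0 R r l r0 _ (@ls_gt R _ l l0 _).
  rewrite hr lee_fin ler10 => /(_ _ _)/implyP; apply => //.
  rewrite -/lN -/lb -tlb mulrA ltr_pM2r // -ltr_pdivrMr //.
by rewrite -[limn_esup _]/L LE lte_fin.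
Qed.
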